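(* Let $\alpha\ge5$ and $g_\alpha(y)=\sum_{k,l\in\mathbb{Z}}\exp\!\big(-\tfrac{\pi\alpha}{y}(k^2+kl+(\tfrac14+y^2)l^2)\big)\cos\big(2\pi(ka_2(y)-la_1(y))\big)$ with $a_1(y)=\tfrac14+\tfrac1{16y^2}$, $a_2(y)=\tfrac12-\tfrac1{8y^2}$. Then $g_\alpha''(y)<0$ for all $y\in\big[\tfrac{\sqrt3}2,\tfrac{\sqrt3}2+\tfrac1{4\sqrt\alpha}\big]$. *)

(* Defs.v *)
From Stdlib Require Import Reals ZArith.
From Coquelicot Require Import Coquelicot.
Open Scope R_scope.

Definition sumZ (f : Z -> R) : R :=
  Series (fun n : nat => f (Z.of_nat n)) + Series (fun n : nat => f (- Z.of_nat (S n))%Z).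

Definition a1 (y : R) : R := 1/4 + 1 / (16 * y ^ 2).
Definition a2 (y : R) : R := 1/2 - 1 / (8 * y ^ 2).

Definition g_term (alpha y : R) (k l : Z) : R :=
  let kr := IZR k in let lr := IZR l in
  exp (- (PI * alpha / y) * (kr ^ 2 + kr * lr + (1/4 + y ^ 2) * lr ^ 2))
  * cos (2 * PI * (kr * a2 y - lr * a1 y)).

(* g_alpha(y) = sum over (k,l) in Z^2 (absolutely convergent for y > 0,
   so the iterated sum equals the double sum). *)
Definition g (alpha y : R) : R := sumZ (fun k => sumZ (fun l => g_term alpha y k l)).

(* Main.v *)
Require Import Defs.
From Stdlib Require Import Reals ZArith Lra Lia Psatz.
From Coquelicot Require Import Coquelicot.
Open Scope R_scope.

Lemma Mtest (f : nat -> R -> R) (D : R -> Prop) (M : nat -> R) :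
  (forall n x, D x -> Rabs (f n x) <= M n) -> ex_series M ->
  CVU_dom (fun n x => sum_n (fun k => f k x) n) D.
Proof.
  intros Hb HM. apply CVU_dom_cauchy. intros eps.
  destruct (Cauchy_ex_series M HM eps) as [N HN].
  exists N. intros n m x Dx Hn Hm.
  assert (key : forall n m, (N <= n)%nat -> (n <= m)%nat ->
     Rabs (sum_n (fun k => f k x) n - sum_n (fun k => f k x) m) < eps).
  { clear n m Hn Hm. intros n m Hn Hnm.
    rewrite Rabs_minus_sym.
    assert (E : sum_n (fun k => f k x) m - sum_n (fun k => f k x) n
                = sum_n_m (fun k => f k x) (S n) m).
    { symmetry. exact (@sum_n_m_sum_n R_AbelianGroup (fun k => f k x) n m Hnm). }
    rewrite E.
    eapply Rle_lt_trans.
    - apply (norm_sum_n_m (fun k => f k x)).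
    - eapply Rle_lt_trans; [| apply (HN (S n) m); lia].
      eapply Rle_trans; [| apply Rle_abs].
      apply sum_n_m_le. intros k. apply Hb. exact Dx. }
  destruct (le_lt_dec n m) as [H|H].
  - apply key; lia.
  - rewrite Rabs_minus_sym. apply key; lia.
Qed.

Lemma continuous_sum_n (f : nat -> R -> R) x n :
  (forall k, continuous (f k) x) -> continuous (fun y => sum_n (fun k => f k y) n) x.
Proof.
  intros H. induction n.
  - eapply continuous_ext; [| apply (H 0%nat)]. intros y. rewrite sum_O. reflexivity.
  - apply (continuous_ext (fun y => sum_n (fun k => f k y) n + f (S n) y)).
    + intros y. rewrite sum_Sn. reflexivity.
    + apply (continuous_plus (fun y => sum_n (fun k => f k y) n) (fun y => f (S n) y)); auto.
Qed.

Definition Dint (lo hi : R) (x : R) : Prop := lo < x < hi.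

Lemma Dint_open lo hi : open (Dint lo hi).
Proof. unfold Dint. apply open_and; [apply open_gt | apply open_lt]. Qed.

Lemma Dint_conn lo hi : is_connected (Dint lo hi).
Proof. unfold is_connected, Dint. intros a b x Ha Hb Hx. lra. Qed.

Lemma Dint_loc lo hi x : Dint lo hi x -> locally x (Dint lo hi).
Proof. intros H. apply (Dint_open lo hi x H). Qed.

Definition psum (f : nat -> R -> R) (n : nat) (y : R) : R := sum_n (fun k => f k y) n.

Lemma series_is_derive (f f' : nat -> R -> R) (lo hi : R) (M M' : nat -> R) :
  (forall n x, Dint lo hi x -> is_derive (f n) x (f' n x)) ->
  (forall n x, Dint lo hi x -> continuous (f' n) x) ->
  (forall n x, Dint lo hi x -> Rabs (f n x) <= M n) -> ex_series M ->
  (forall n x, Dint lo hi x -> Rabs (f' n x) <= M' n) -> ex_series M' ->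
  forall x, Dint lo hi x ->
  is_derive (fun y => Series (fun n => f n y)) x (Series (fun n => f' n x)).
Proof.
  intros Hd Hc Hb HM Hb' HM' x Dx.
  assert (HDn : forall n y, Dint lo hi y -> Derive (psum f n) y = psum f' n y).
  { intros n y Dy. unfold psum. rewrite (Derive_sum_n (fun k z => f k z)).
    - apply sum_n_ext. intros k. apply is_derive_unique. apply Hd. exact Dy.
    - intros k _. eexists. apply Hd. exact Dy. }
  assert (C1 := Mtest f (Dint lo hi) M Hb HM).
  assert (C2 := Mtest f' (Dint lo hi) M' Hb' HM').
  assert (H := CVU_Derive (psum f) (Dint lo hi) (Dint_open lo hi) (Dint_conn lo hi) C1).
  assert (E1 : forall n y, Dint lo hi y -> ex_derive (psum f n) y).
  { intros n y Dy. eexists. unfold psum. apply (is_derive_sum_n (fun k z => f k z)).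
    intros k _. apply Hd. exact Dy. }
  assert (E2 : forall n y, Dint lo hi y -> continuity_pt (Derive (psum f n)) y).
  { intros n y Dy. apply (proj2 (continuity_pt_filterlim _ _)).
      apply (continuous_ext_loc _ (fun z => psum f' n z)).
      + generalize (Dint_loc lo hi y Dy). apply filter_imp. intros z Dz. symmetry. apply HDn. exact Dz.
      + unfold psum. apply continuous_sum_n. intros k. apply Hc. exact Dy. }
  assert (E3 : CVU_dom (fun n y => Derive (psum f n) y) (Dint lo hi)).
  { intros eps. destruct (C2 eps) as [N HN]. exists N. intros n Hn z Dz.
      rewrite HDn by exact Dz.
      rewrite (Lim_seq_ext (fun n0 => Derive (psum f n0) z) (fun n0 => psum f' n0 z)).
      + apply HN; assumption.
      + intros n0. apply HDn. exact Dz. }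
  pose proof (H E1 E2 E3 x Dx) as H'.
  rewrite (Lim_seq_ext (fun n => Derive (psum f n) x) (fun n => psum f' n x)) in H'.
  - unfold Series. unfold psum in H'. exact H'.
  - intros n. apply HDn. exact Dx.
Qed.

Lemma series_continuous (f : nat -> R -> R) (lo hi : R) (M : nat -> R) :
  (forall n x, Dint lo hi x -> continuous (f n) x) ->
  (forall n x, Dint lo hi x -> Rabs (f n x) <= M n) -> ex_series M ->
  forall x, Dint lo hi x -> continuous (fun y => Series (fun n => f n y)) x.
Proof.
  intros Hc Hb HM x Dx.
  assert (C1 := Mtest f (Dint lo hi) M Hb HM).
  assert (H := CVU_cont_open _ _ (Dint_open lo hi) C1).
  assert (H' : continuity_pt (fun y => real (Lim_seq (fun n => sum_n (fun k => f k y) n))) x).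
  { apply H; [| exact Dx]. intros n y Dy. apply (proj2 (continuity_pt_filterlim _ _)).
    apply continuous_sum_n. intros k. apply Hc. exact Dy. }
  apply (proj1 (continuity_pt_filterlim _ _)) in H'. unfold Series. exact H'.
Qed.

Definition exZ (M : Z -> R) : Prop :=
  ex_series (fun n => M (Z.of_nat n)) /\ ex_series (fun n => M (- Z.of_nat (S n))%Z).

Lemma sumZ_is_derive (F F' : Z -> R -> R) (lo hi : R) (M M' : Z -> R) :
  (forall k x, Dint lo hi x -> is_derive (F k) x (F' k x)) ->
  (forall k x, Dint lo hi x -> continuous (F' k) x) ->
  (forall k x, Dint lo hi x -> Rabs (F k x) <= M k) -> exZ M ->
  (forall k x, Dint lo hi x -> Rabs (F' k x) <= M' k) -> exZ M' ->
  forall x, Dint lo hi x ->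
  is_derive (fun y => sumZ (fun k => F k y)) x (sumZ (fun k => F' k x)).
Proof.
  intros Hd Hc Hb [HM1 HM2] Hb' [HM1' HM2'] x Dx. unfold sumZ.
  apply (is_derive_plus (fun y => Series (fun n => F (Z.of_nat n) y))
                        (fun y => Series (fun n => F (- Z.of_nat (S n))%Z y))).
  - apply (series_is_derive (fun n => F (Z.of_nat n)) (fun n => F' (Z.of_nat n)) lo hi
             (fun n => M (Z.of_nat n)) (fun n => M' (Z.of_nat n))); auto.
  - apply (series_is_derive (fun n => F (- Z.of_nat (S n))%Z) (fun n => F' (- Z.of_nat (S n))%Z) lo hi
             (fun n => M (- Z.of_nat (S n))%Z) (fun n => M' (- Z.of_nat (S n))%Z)); auto.
Qed.

Lemma sumZ_continuous (F : Z -> R -> R) (lo hi : R) (M : Z -> R) :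
  (forall k x, Dint lo hi x -> continuous (F k) x) ->
  (forall k x, Dint lo hi x -> Rabs (F k x) <= M k) -> exZ M ->
  forall x, Dint lo hi x -> continuous (fun y => sumZ (fun k => F k y)) x.
Proof.
  intros Hc Hb [HM1 HM2] x Dx. unfold sumZ.
  apply (continuous_plus (fun y => Series (fun n => F (Z.of_nat n) y))
                        (fun y => Series (fun n => F (- Z.of_nat (S n))%Z y))).
  - apply (series_continuous (fun n => F (Z.of_nat n)) lo hi (fun n => M (Z.of_nat n))); auto.
  - apply (series_continuous (fun n => F (- Z.of_nat (S n))%Z) lo hi (fun n => M (- Z.of_nat (S n))%Z)); auto.
Qed.

Lemma Series_zero : Series (fun _ => 0) = 0.
Proof.
  rewrite (Series_ext (fun _ => 0) (fun n => 0 * 1)) by (intros; ring).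
  rewrite (Series_scal_l 0 (fun _ => 1)). ring.
Qed.

Lemma ex_series_le_R (a b : nat -> R) : (forall n, Rabs (a n) <= b n) -> ex_series b -> ex_series a.
Proof. intros H Hb. apply (ex_series_le a b); auto. Qed.

Lemma Series_le_gen (a b : nat -> R) : (forall n, a n <= b n) -> ex_series a -> ex_series b ->
  Series a <= Series b.
Proof.
  intros H Ha Hb.
  assert (Series (fun _ => 0) <= Series (fun n => b n - a n)).
  { apply Series_le. intros n. specialize (H n); lra.
    apply (ex_series_minus b a); auto. }
  rewrite Series_zero, Series_minus in H0 by auto. lra.
Qed.

Definition exZf (f : Z -> R) := exZ f.

Lemma sumZ_le (f g : Z -> R) : (forall k, f k <= g k) -> exZ f -> exZ g -> sumZ f <= sumZ g.
Proof.
  intros H [H1 H2] [H3 H4]. unfold sumZ.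
  apply Rplus_le_compat; apply Series_le_gen; auto.
Qed.

Lemma sumZ_plus (f g : Z -> R) : exZ f -> exZ g -> sumZ (fun k => f k + g k) = sumZ f + sumZ g.
Proof.
  intros [H1 H2] [H3 H4]. unfold sumZ.
  rewrite (Series_plus (fun n => f (Z.of_nat n)) (fun n => g (Z.of_nat n))) by auto.
  rewrite (Series_plus (fun n => f (- Z.of_nat (S n))%Z) (fun n => g (- Z.of_nat (S n))%Z)) by auto.
  ring.
Qed.

Lemma sumZ_scal (c : R) (f : Z -> R) : sumZ (fun k => c * f k) = c * sumZ f.
Proof.
  unfold sumZ. rewrite (Series_scal_l c (fun n => f (Z.of_nat n))).
  rewrite (Series_scal_l c (fun n => f (- Z.of_nat (S n))%Z)). ring.
Qed.

Lemma sumZ_ext (f g : Z -> R) : (forall k, f k = g k) -> sumZ f = sumZ g.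
Proof. intros H. unfold sumZ. rewrite (Series_ext _ (fun n => g (Z.of_nat n))) by auto.
  rewrite (Series_ext (fun n => f (- Z.of_nat (S n))%Z) (fun n => g (- Z.of_nat (S n))%Z)) by auto.
  reflexivity. Qed.

Lemma sumZ_opp (f : Z -> R) : sumZ (fun k => - f k) = - sumZ f.
Proof. rewrite (sumZ_ext _ (fun k => -1 * f k)) by (intros; ring). rewrite sumZ_scal. ring. Qed.

Lemma exZ_plus f g : exZ f -> exZ g -> exZ (fun k => f k + g k).
Proof.
  intros [H1 H2] [H3 H4]. split.
  - apply (ex_series_plus (fun n => f (Z.of_nat n)) (fun n => g (Z.of_nat n))); auto.
  - apply (ex_series_plus (fun n => f (- Z.of_nat (S n))%Z) (fun n => g (- Z.of_nat (S n))%Z)); auto.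
Qed.

Lemma exZ_scal c f : exZ f -> exZ (fun k => c * f k).
Proof.
  intros [H1 H2]. split.
  - apply (ex_series_scal_l c (fun n => f (Z.of_nat n))); auto.
  - apply (ex_series_scal_l c (fun n => f (- Z.of_nat (S n))%Z)); auto.
Qed.

Definition gZ (c r : R) (k : Z) : R := c * r ^ (Z.abs_nat k).

Lemma absnat_pos n : Z.abs_nat (Z.of_nat n) = n.
Proof. lia. Qed.
Lemma absnat_neg n : Z.abs_nat (- Z.of_nat (S n)) = S n.
Proof. lia. Qed.

Lemma gZ_ex c r : 0 <= r < 1 -> exZ (gZ c r).
Proof.
  intros Hr. unfold gZ. split.
  - apply (ex_series_ext (fun n => c * r ^ n)).
    + intros n. rewrite absnat_pos. reflexivity.
    + apply (ex_series_scal_l c (fun n => r ^ n)). apply ex_series_geom. rewrite Rabs_pos_eq; lra.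
  - apply (ex_series_ext (fun n => (c * r) * r ^ n)).
    + intros n. rewrite absnat_neg. simpl. ring.
    + apply (ex_series_scal_l (c*r) (fun n => r ^ n)). apply ex_series_geom. rewrite Rabs_pos_eq; lra.
Qed.

Lemma gZ_sum c r : 0 <= r < 1 -> sumZ (gZ c r) = c * ((1 + r) / (1 - r)).
Proof.
  intros Hr. unfold sumZ, gZ.
  rewrite (Series_ext _ (fun n => c * r ^ n)) by (intros n; rewrite absnat_pos; reflexivity).
  rewrite (Series_ext (fun n => c * r ^ Z.abs_nat (- Z.of_nat (S n))) (fun n => (c * r) * r ^ n))
    by (intros n; rewrite absnat_neg; simpl; ring).
  rewrite (Series_scal_l c (fun n => r ^ n)).
  rewrite (Series_scal_l (c * r) (fun n => r ^ n)).
  rewrite (is_series_unique (fun n => r ^ n) (/ (1 - r))).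
  - field. lra.
  - apply is_series_geom. rewrite Rabs_pos_eq; lra.
Qed.

Lemma exZ_bound (f : Z -> R) (M : Z -> R) : (forall k, Rabs (f k) <= M k) -> exZ M -> exZ f.
Proof.
  intros H [H1 H2]. split.
  - apply (ex_series_le_R _ (fun n => M (Z.of_nat n))); auto.
  - apply (ex_series_le_R _ (fun n => M (- Z.of_nat (S n))%Z)); auto.
Qed.

Lemma sumZ_abs_le (f M : Z -> R) : (forall k, Rabs (f k) <= M k) -> exZ M ->
  Rabs (sumZ f) <= sumZ M.
Proof.
  intros H HM. assert (Hf := exZ_bound f M H HM).
  assert (HfA : exZ (fun k => - f k)).
  { apply (exZ_bound _ M); auto. intros k. rewrite Rabs_Ropp. auto. }
  apply Rabs_le. split.
  - assert (sumZ (fun k => - f k) <= sumZ M).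
    { apply sumZ_le; auto. intros k. specialize (H k). apply Rabs_le_between in H. lra. }
    rewrite sumZ_opp in H0. lra.
  - apply sumZ_le; auto. intros k. specialize (H k). apply Rabs_le_between in H. lra.
Qed.

Lemma is_derive_ecs (u v A B : R -> R) x du dv dA dB :
  is_derive u x du -> is_derive v x dv -> is_derive A x dA -> is_derive B x dB ->
  is_derive (fun y => exp (u y) * (A y * cos (v y) + B y * sin (v y))) x
   (exp (u x) * ((du * A x + dA + B x * dv) * cos (v x) + (du * B x + dB - A x * dv) * sin (v x))).
Proof.
  intros Hu Hv HA HB.
  assert (h1 := is_derive_comp exp u x (exp (u x)) du (is_derive_exp (u x)) Hu).
  assert (h2 := is_derive_comp cos v x (- sin (v x)) dv (is_derive_cos (v x)) Hv).
  assert (h3 := is_derive_comp sin v x (cos (v x)) dv (is_derive_sin (v x)) Hv).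
  assert (hc : forall n m : R_AbsRing, mult n m = mult m n).
  { intros n m. apply Rmult_comm. }
  assert (h4 := is_derive_mult A (fun y => cos (v y)) x _ _ HA h2 hc).
  assert (h5 := is_derive_mult B (fun y => sin (v y)) x _ _ HB h3 hc).
  assert (h6 := is_derive_plus _ _ x _ _ h4 h5).
  assert (h7 := is_derive_mult (fun y => exp (u y)) _ x _ _ h1 h6 hc).
  match type of h7 with is_derive _ _ ?d =>
    replace (exp (u x) * ((du * A x + dA + B x * dv) * cos (v x) + (du * B x + dB - A x * dv) * sin (v x))) with d
  end.
  - exact h7.
  - unfold plus, mult, scal; simpl. unfold mult; simpl. ring.
Qed.

Ltac nz := repeat split; repeat (match goal with |- _ * _ <> 0 => apply Rmult_integral_contrapositive_currified end); try assumption; try lra.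

Definition U (al y K L : R) : R := - (PI * al / y) * (K ^ 2 + K * L + (1/4 + y ^ 2) * L ^ 2).
Definition Th (y K L : R) : R := 2 * PI * (K * a2 y - L * a1 y).
Definition P0 (K L : R) : R := K ^ 2 + K * L + L ^ 2 / 4.
Definition qp (y K L : R) : R := - P0 K L / y ^ 2 + L ^ 2.
Definition qpp (y K L : R) : R := 2 * P0 K L / y ^ 3.
Definition thp (y K L : R) : R := PI * (2 * K + L) / (4 * y ^ 3).
Definition thpp (y K L : R) : R := - 3 * PI * (2 * K + L) / (4 * y ^ 4).

Definition T0 (al y K L : R) : R := exp (U al y K L) * cos (Th y K L).
Definition T1 (al y K L : R) : R :=
  exp (U al y K L) * (- (PI * al) * qp y K L * cos (Th y K L) - thp y K L * sin (Th y K L)).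
Definition T2 (al y K L : R) : R :=
  exp (U al y K L) * ((PI ^ 2 * al ^ 2 * qp y K L ^ 2 - PI * al * qpp y K L - thp y K L ^ 2) * cos (Th y K L)
                 + (2 * PI * al * qp y K L * thp y K L - thpp y K L) * sin (Th y K L)).

Lemma g_term_T0 al y k l : g_term al y k l = T0 al y (IZR k) (IZR l).
Proof. reflexivity. Qed.

Lemma U_deriv al K L x : x <> 0 -> is_derive (fun y => U al y K L) x (- (PI * al) * qp x K L).
Proof. intros Hx. unfold U, qp, P0. auto_derive; [nz | field; auto]. Qed.
Lemma Th_deriv K L x : x <> 0 -> is_derive (fun y => Th y K L) x (thp x K L).
Proof. intros Hx. unfold Th, thp, a1, a2. auto_derive; [nz | field; auto]. Qed.
Lemma qp_deriv K L x : x <> 0 -> is_derive (fun y => qp y K L) x (qpp x K L).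
Proof. intros Hx. unfold qp, qpp, P0. auto_derive; [nz | field; auto]. Qed.
Lemma thp_deriv K L x : x <> 0 -> is_derive (fun y => thp y K L) x (thpp x K L).
Proof. intros Hx. unfold thp, thpp. auto_derive; [nz | field; auto]. Qed.

Lemma T0_deriv al K L x : x <> 0 -> is_derive (fun y => T0 al y K L) x (T1 al x K L).
Proof.
  intros Hx.
  assert (H := is_derive_ecs (fun y => U al y K L) (fun y => Th y K L) (fun _ => 1) (fun _ => 0) x
     _ _ 0 0 (U_deriv al K L x Hx) (Th_deriv K L x Hx) (is_derive_const 1 x) (is_derive_const 0 x)).
  eapply is_derive_ext; [| match type of H with is_derive _ _ ?d =>
      replace (T1 al x K L) with d; [exact H|] end].
  - intros t. unfold T0. simpl. ring.
  - unfold T1. simpl. ring.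
Qed.

Lemma T1_deriv al K L x : x <> 0 -> is_derive (fun y => T1 al y K L) x (T2 al x K L).
Proof.
  intros Hx.
  assert (HA : is_derive (fun y => - (PI * al) * qp y K L) x (- (PI * al) * qpp x K L)).
  { assert (h := qp_deriv K L x Hx).
    assert (h' := is_derive_scal (fun y => qp y K L) x (- (PI * al)) _ h).
    eapply is_derive_ext; [| exact h']. intros t. reflexivity. }
  assert (HB : is_derive (fun y => - thp y K L) x (- thpp x K L)).
  { assert (h := thp_deriv K L x Hx).
    assert (h' := is_derive_opp (fun y => thp y K L) x _ h).
    eapply is_derive_ext; [| exact h']. intros t. reflexivity. }
  assert (H := is_derive_ecs (fun y => U al y K L) (fun y => Th y K L) _ _ x
     _ _ _ _ (U_deriv al K L x Hx) (Th_deriv K L x Hx) HA HB).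
  eapply is_derive_ext; [| match type of H with is_derive _ _ ?d =>
      replace (T2 al x K L) with d; [exact H|] end].
  - intros t. unfold T1. simpl. ring.
  - unfold T2. simpl. ring.
Qed.

Lemma T1_cont al K L x : x <> 0 -> continuous (fun y => T1 al y K L) x.
Proof. intros Hx. apply (ex_derive_continuous (fun y => T1 al y K L)). eexists. apply T1_deriv. auto. Qed.

Lemma T2_cont al K L x : x <> 0 -> continuous (fun y => T2 al y K L) x.
Proof.
  intros Hx. apply (ex_derive_continuous (fun y => T2 al y K L)).
  unfold T2, U, Th, qp, qpp, thp, thpp, P0, a1, a2.
  auto_derive. nz.
Qed.

Lemma IZR_abs_le_sq (n : Z) : Rabs (IZR n) <= IZR n ^ 2.
Proof.
  destruct (Z.eq_dec n 0) as [->|Hn].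
  - simpl. rewrite Rabs_R0. lra.
  - assert (H1 : 1 <= Rabs (IZR n)).
    { rewrite Rabs_Zabs. apply IZR_le. lia. }
    rewrite <- pow2_abs. nra.
Qed.

Lemma s_le_sq (m l : Z) : IZR m ^ 2 + IZR l ^ 2 <= (IZR m ^ 2 + IZR l ^ 2) ^ 2.
Proof.
  replace (IZR m ^ 2 + IZR l ^ 2) with (IZR (m * m + l * l)).
  - destruct (Z.eq_dec (m * m + l * l) 0) as [->|Hn].
    + simpl. lra.
    + assert (1 <= IZR (m * m + l * l)) by (apply IZR_le; nia). nra.
  - rewrite plus_IZR, !mult_IZR. ring.
Qed.

Lemma Z_s_ge_abs (k l : Z) : (Z.abs k + Z.abs l <= (2 * k + l) ^ 2 + l ^ 2)%Z.
Proof.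
  set (m := (2 * k + l)%Z).
  assert (Hm : (Z.abs m <= m ^ 2)%Z).
  { destruct (Z.eq_dec m 0) as [->|Hn]; [lia|]. assert (1 <= Z.abs m)%Z by lia.
    destruct (Z.le_gt_cases 0 m); [rewrite Z.abs_eq in * by lia | rewrite Z.abs_neq in * by lia]; nia. }
  assert (Hk : (2 * Z.abs k <= Z.abs m + Z.abs l)%Z) by (unfold m; lia).
  destruct (Z.le_gt_cases 2 (Z.abs l)).
  - assert (l ^ 2 = Z.abs l * Z.abs l)%Z by (destruct (Z.le_gt_cases 0 l); [rewrite Z.abs_eq by lia| rewrite Z.abs_neq by lia]; ring).
    nia.
  - assert (Z.abs l = 0 \/ Z.abs l = 1)%Z by lia.
    destruct H0 as [H0|H0].
    + assert (l = 0)%Z by lia. subst l. nia.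
    + assert (l = 1 \/ l = -1)%Z by lia.
      assert (m <> 0)%Z by (unfold m; lia).
      assert (1 <= Z.abs m)%Z by lia.
      destruct H1 as [->| ->]; nia.
Qed.

Lemma s_ge_abs (k l : Z) :
  Rabs (IZR k) + Rabs (IZR l) <= (2 * IZR k + IZR l) ^ 2 + IZR l ^ 2.
Proof.
  rewrite !Rabs_Zabs.
  assert (E : IZR ((2 * k + l) * (2 * k + l) + l * l) = (2 * IZR k + IZR l) ^ 2 + IZR l ^ 2).
  { rewrite plus_IZR, !mult_IZR, plus_IZR, mult_IZR. simpl. ring. }
  rewrite <- E, <- plus_IZR. apply IZR_le. generalize (Z_s_ge_abs k l). nia.
Qed.

Lemma abs_mul_le (a b A B : R) : Rabs a <= A -> Rabs b <= B -> Rabs (a * b) <= A * B.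
Proof.
  intros Ha Hb. rewrite Rabs_mult.
  apply Rmult_le_compat; auto; apply Rabs_pos.
Qed.

Lemma bracket_real (p al z m L c sn : R) :
  3 <= p <= 4 -> 5 <= al -> 1 <= z <= 20/17 ->
  Rabs m <= m ^ 2 -> m ^ 2 + L ^ 2 <= (m ^ 2 + L ^ 2) ^ 2 ->
  Rabs c <= 1 -> Rabs sn <= 1 ->
  let s := m ^ 2 + L ^ 2 in
  let qp := - (m ^ 2 / 4) * z ^ 2 + L ^ 2 in
  let qpp := m ^ 2 / 2 * z ^ 3 in
  let thp := p * m * z ^ 3 / 4 in
  let thpp := - 3 * p * m * z ^ 4 / 4 in
  Rabs ((p ^ 2 * al ^ 2 * qp ^ 2 - p * al * qpp - thp ^ 2) * c + (2 * p * al * qp * thp - thpp) * sn)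
    <= 25 * al ^ 2 * s ^ 2 /\
  Rabs (- (p * al) * qp * c - thp * sn) <= 25 * al ^ 2 * s ^ 2.
Proof.
  intros Hp Hal Hz Hm Hs Hc Hsn s qp qpp thp thpp.
  assert (Hz2 : z ^ 2 <= 400 / 289) by nra.
  assert (Hz3 : z ^ 3 <= 163 / 100) by nra.
  assert (Hz4 : z ^ 4 <= 192 / 100) by nra.
  assert (Hz0 : 0 <= z) by lra.
  assert (Hs0 : 0 <= s) by (unfold s; nra).
  assert (Hm2 : 0 <= m ^ 2) by nra.
  assert (HL2 : 0 <= L ^ 2) by nra.
  assert (h1 : Rabs qp <= s).
  { unfold qp, s. apply Rabs_le. split; nra. }
  assert (h2 : 0 <= qpp <= s).
  { unfold qpp, s. split; nra. }
  assert (Hms : Rabs m <= s) by (unfold s; lra).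
  assert (Hm0 : 0 <= Rabs m) by apply Rabs_pos.
  assert (h3 : Rabs thp <= 2 * s).
  { replace thp with ((p * z ^ 3 / 4) * m) by (unfold thp; field).
    rewrite Rabs_mult, (Rabs_pos_eq (p * z ^ 3 / 4)) by nra.
    assert (p * z ^ 3 / 4 <= 163/100) by nra. nra. }
  assert (h4 : Rabs thpp <= 6 * s).
  { replace thpp with (- (3 * p * z ^ 4 / 4) * m) by (unfold thpp; field).
    rewrite Rabs_mult, Rabs_Ropp, (Rabs_pos_eq (3 * p * z ^ 4 / 4)) by nra.
    assert (3 * p * z ^ 4 / 4 <= 6) by nra. nra. }
  assert (hq2 : qp ^ 2 <= s ^ 2).
  { rewrite <- (pow2_abs qp). apply pow_incr. split; [apply Rabs_pos| exact h1]. }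
  assert (ht2 : thp ^ 2 <= 4 * s ^ 2).
  { rewrite <- (pow2_abs thp). replace (4 * s ^ 2) with ((2 * s) ^ 2) by ring.
    apply pow_incr. split; [apply Rabs_pos| exact h3]. }
  assert (hA : Rabs (p ^ 2 * al ^ 2 * qp ^ 2 - p * al * qpp - thp ^ 2) <= 16 * al ^ 2 * s ^ 2 + 4 * al * s + 4 * s ^ 2).
  { assert (0 <= p ^ 2 * al ^ 2 * qp ^ 2) by (apply Rmult_le_pos; [nra| apply pow2_ge_0]).
    assert (p ^ 2 * al ^ 2 * qp ^ 2 <= 16 * al ^ 2 * s ^ 2).
    { assert (p ^ 2 <= 16) by nra.
      apply Rmult_le_compat; [nra | apply pow2_ge_0 | | exact hq2].
      apply Rmult_le_compat_r; nra. }
    assert (0 <= p * al * qpp <= 4 * al * s).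
    { split. apply Rmult_le_pos; nra. apply Rmult_le_compat; try nra. }
    assert (0 <= thp ^ 2) by apply pow2_ge_0.
    apply Rabs_le. split; nra. }
  assert (hB : Rabs (2 * p * al * qp * thp - thpp) <= 16 * al * s ^ 2 + 6 * s).
  { assert (Rabs (2 * p * al * qp * thp) <= 2 * 4 * al * s * (2 * s)).
    { apply abs_mul_le; auto. apply abs_mul_le; auto.
      rewrite Rabs_pos_eq by nra. nra. }
    eapply Rle_trans; [apply Rabs_triang|]. rewrite Rabs_Ropp. nra. }
  assert (hss : s <= s ^ 2) by (unfold s in *; nra).
  split.
  - eapply Rle_trans; [apply Rabs_triang|].
    assert (Rabs ((p ^ 2 * al ^ 2 * qp ^ 2 - p * al * qpp - thp ^ 2) * c) <= 16 * al ^ 2 * s ^ 2 + 4 * al * s + 4 * s ^ 2).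
    { rewrite Rabs_mult. eapply Rle_trans; [apply Rmult_le_compat_l; [apply Rabs_pos| exact Hc]|]. lra. }
    assert (Rabs ((2 * p * al * qp * thp - thpp) * sn) <= 16 * al * s ^ 2 + 6 * s).
    { rewrite Rabs_mult. eapply Rle_trans; [apply Rmult_le_compat_l; [apply Rabs_pos| exact Hsn]|]. lra. }
    assert (0 <= s ^ 2) by nra.
    nra.
  - eapply Rle_trans; [apply Rabs_triang|]. rewrite Rabs_Ropp.
    assert (Rabs (- (p * al) * qp * c) <= 4 * al * s).
    { replace (4 * al * s) with ((4 * al) * s * 1) by ring.
      apply abs_mul_le; auto. apply abs_mul_le; auto. rewrite Rabs_Ropp, Rabs_pos_eq by nra. nra. }
    assert (Rabs (thp * sn) <= 2 * s).
    { replace (2 * s) with (2 * s * 1) by ring. apply abs_mul_le; auto. }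
    assert (0 <= s ^ 2) by nra.
    nra.
Qed.

Lemma PI_bounds : 3 <= PI <= 4.
Proof. split; [generalize PI2_3_2; lra | apply PI_4]. Qed.

Lemma T_bounds (al y : R) (k l : Z) : 5 <= al -> 17/20 <= y <= 99/100 ->
  let K := IZR k in let L := IZR l in let s := (2 * K + L) ^ 2 + L ^ 2 in
  Rabs (T0 al y K L) <= exp (U al y K L) * (1 + 25 * al ^ 2 * s ^ 2) /\
  Rabs (T1 al y K L) <= exp (U al y K L) * (1 + 25 * al ^ 2 * s ^ 2) /\
  Rabs (T2 al y K L) <= exp (U al y K L) * (1 + 25 * al ^ 2 * s ^ 2).
Proof.
  intros Hal Hy K L s.
  assert (Hy0 : y <> 0) by lra.
  assert (Hz : 1 <= / y <= 20 / 17).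
  { split.
    - rewrite <- Rinv_1. apply Rinv_le_contravar; lra.
    - replace (20/17) with (/ (17/20)) by field. apply Rinv_le_contravar; lra. }
  assert (HPI := PI_bounds).
  assert (Hm : Rabs (2 * K + L) <= (2 * K + L) ^ 2).
  { replace (2 * K + L) with (IZR (2 * k + l)) by (unfold K, L; rewrite plus_IZR, mult_IZR; reflexivity).
    apply IZR_abs_le_sq. }
  assert (Hs : (2 * K + L) ^ 2 + L ^ 2 <= ((2 * K + L) ^ 2 + L ^ 2) ^ 2).
  { replace (2 * K + L) with (IZR (2 * k + l)) by (unfold K, L; rewrite plus_IZR, mult_IZR; reflexivity).
    apply s_le_sq. }
  assert (Hc := COS_bound (Th y K L)). assert (Hsn := SIN_bound (Th y K L)).
  assert (Hc' : Rabs (cos (Th y K L)) <= 1) by (apply Rabs_le; lra).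
  assert (Hsn' : Rabs (sin (Th y K L)) <= 1) by (apply Rabs_le; lra).
  destruct (bracket_real PI al (/ y) (2 * K + L) L (cos (Th y K L)) (sin (Th y K L))
               HPI Hal Hz Hm Hs Hc' Hsn') as [B2 B1].
  assert (E1 : qp y K L = - ((2 * K + L) ^ 2 / 4) * (/ y) ^ 2 + L ^ 2) by (unfold qp, P0; field; lra).
  assert (E2 : qpp y K L = (2 * K + L) ^ 2 / 2 * (/ y) ^ 3) by (unfold qpp, P0; field; lra).
  assert (E3 : thp y K L = PI * (2 * K + L) * (/ y) ^ 3 / 4) by (unfold thp; field; lra).
  assert (E4 : thpp y K L = - 3 * PI * (2 * K + L) * (/ y) ^ 4 / 4) by (unfold thpp; field; lra).
  assert (Hex : 0 < exp (U al y K L)) by apply exp_pos.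
  assert (Hs0 : 0 <= 25 * al ^ 2 * s ^ 2).
  { apply Rmult_le_pos; [nra | apply pow2_ge_0]. }
  split; [|split].
  - unfold T0. rewrite Rabs_mult, (Rabs_pos_eq (exp _)) by lra. nra.
  - unfold T1. rewrite Rabs_mult, (Rabs_pos_eq (exp _)) by lra.
    rewrite E1, E3. apply Rmult_le_compat_l; [lra|]. unfold s. lra.
  - unfold T2. rewrite Rabs_mult, (Rabs_pos_eq (exp _)) by lra.
    rewrite E1, E2, E3, E4. apply Rmult_le_compat_l; [lra|]. unfold s. lra.
Qed.

Definition r4 : R := exp (- 1 / 4).

Lemma r4_bounds : 0 <= r4 <= 4/5.
Proof.
  unfold r4. split; [left; apply exp_pos|].
  assert (H := exp_ineq1_le (1/4)).
  assert (E : exp (-1/4) * exp (1/4) = 1).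
  { rewrite <- exp_plus. replace (-1/4 + 1/4) with 0 by field. apply exp_0. }
  assert (0 < exp (-1/4)) by apply exp_pos. nra.
Qed.

Lemma sq_le_exp x : 0 <= x -> x ^ 2 <= 4 * exp x.
Proof.
  intros Hx. replace x with (x/2 + x/2) at 2 by field. rewrite exp_plus.
  assert (H := exp_ineq1_le (x/2)). nra.
Qed.

Lemma Rabs_IZR_INR (k : Z) : Rabs (IZR k) = INR (Z.abs_nat k).
Proof. rewrite Rabs_Zabs, INR_IZR_INZ, Nat2Z.inj_abs_nat. reflexivity. Qed.

Lemma exp_INR_pow n : exp (- INR n / 4) = r4 ^ n.
Proof.
  induction n.
  - simpl. replace (- 0 / 4) with 0 by field. apply exp_0.
  - rewrite S_INR. simpl. rewrite <- IHn. unfold r4. rewrite <- exp_plus. f_equal. field.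
Qed.

Lemma exp_abs_split (k l : Z) :
  exp (- (Rabs (IZR k) + Rabs (IZR l)) / 4) = r4 ^ Z.abs_nat k * r4 ^ Z.abs_nat l.
Proof.
  rewrite !Rabs_IZR_INR. rewrite <- !exp_INR_pow. rewrite <- exp_plus. f_equal. field.
Qed.

Lemma exp_mono x y : x <= y -> exp x <= exp y.
Proof. intros [H|H]; [left; apply exp_increasing; auto | subst; lra]. Qed.

Lemma decay (al a s : R) (k l : Z) : 5 <= al ->
  Rabs (IZR k) + Rabs (IZR l) <= s -> a <= - PI * al * s / 4 ->
  exp a * (1 + 25 * al ^ 2 * s ^ 2) <= (1 + 100 * al ^ 2) * (r4 ^ Z.abs_nat k * r4 ^ Z.abs_nat l).
Proof.
  intros Hal Hs Ha.
  assert (Hs0 : 0 <= s) by (generalize (Rabs_pos (IZR k)) (Rabs_pos (IZR l)); lra).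
  assert (HPI := PI_bounds).
  assert (HPa : 15 <= PI * al) by nra.
  assert (HPs : 5 * s <= PI * al * s) by nra.
  assert (H1 : exp a <= exp (- 5 * s / 4)).
  { apply exp_mono. lra. }
  assert (H2 : s ^ 2 <= 4 * exp s) by (apply sq_le_exp; auto).
  assert (H3 : exp s * exp (- 5 * s / 4) = exp (- s / 4)).
  { rewrite <- exp_plus. f_equal. field. }
  assert (H4 : exp (- 5 * s / 4) <= exp (- s / 4)) by (apply exp_mono; lra).
  assert (H5 : exp (- s / 4) <= r4 ^ Z.abs_nat k * r4 ^ Z.abs_nat l).
  { rewrite <- exp_abs_split. apply exp_mono. lra. }
  assert (0 < exp a) by apply exp_pos.
  assert (0 < exp (- 5 * s / 4)) by apply exp_pos.
  assert (0 < exp s) by apply exp_pos.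
  assert (0 <= al ^ 2) by nra.
  assert (0 <= s ^ 2) by nra.
  assert (exp a * (1 + 25 * al ^ 2 * s ^ 2) <= exp (- 5 * s / 4) * (1 + 25 * al ^ 2 * s ^ 2)).
  { apply Rmult_le_compat_r; nra. }
  assert (exp (- 5 * s / 4) * (s ^ 2) <= 4 * exp (- s / 4)).
  { rewrite <- H3. nra. }
  nra.
Qed.

Lemma decay_rest (al a s w : R) (k l : Z) : 5 <= al ->
  Rabs (IZR k) + Rabs (IZR l) <= s -> a <= w - PI * al - PI * al * s / 12 ->
  exp a * (1 + 25 * al ^ 2 * s ^ 2) <= exp w * (al ^ 2 * (101 * exp (- PI * al))) * (r4 ^ Z.abs_nat k * r4 ^ Z.abs_nat l).
Proof.
  intros Hal Hs Ha.
  assert (Hs0 : 0 <= s) by (generalize (Rabs_pos (IZR k)) (Rabs_pos (IZR l)); lra).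
  assert (HPI := PI_bounds).
  set (c := exp w * exp (- PI * al)).
  assert (Hc : 0 < c) by (unfold c; apply Rmult_lt_0_compat; apply exp_pos).
  assert (HPa : 15 <= PI * al) by nra.
  assert (HPs : 15 * s <= PI * al * s) by nra.
  assert (H1 : exp a <= c * exp (- 5 * s / 4)).
  { unfold c. rewrite <- !exp_plus. apply exp_mono. lra. }
  assert (H2 : s ^ 2 <= 4 * exp s) by (apply sq_le_exp; auto).
  assert (H3 : exp s * exp (- 5 * s / 4) = exp (- s / 4)).
  { rewrite <- exp_plus. f_equal. field. }
  assert (H4 : exp (- 5 * s / 4) <= exp (- s / 4)) by (apply exp_mono; lra).
  assert (H5 : exp (- s / 4) <= r4 ^ Z.abs_nat k * r4 ^ Z.abs_nat l).
  { rewrite <- exp_abs_split. apply exp_mono. lra. }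
  assert (0 < exp a) by apply exp_pos.
  assert (0 < exp (- 5 * s / 4)) by apply exp_pos.
  assert (0 < exp s) by apply exp_pos.
  assert (0 <= al ^ 2) by nra.
  assert (1 <= al ^ 2) by nra.
  assert (0 <= s ^ 2) by nra.
  assert (Q1 : exp a * (1 + 25 * al ^ 2 * s ^ 2) <= c * exp (- 5 * s / 4) * (1 + 25 * al ^ 2 * s ^ 2)).
  { apply Rmult_le_compat_r; nra. }
  assert (Q2 : exp (- 5 * s / 4) * (s ^ 2) <= 4 * exp (- s / 4)).
  { rewrite <- H3. nra. }
  assert (Q3 : c * (exp (- 5 * s / 4) * s ^ 2) <= c * (4 * exp (- s / 4))).
  { apply Rmult_le_compat_l; lra. }
  assert (Q4 : c * exp (- 5 * s / 4) <= c * exp (- s / 4)).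
  { apply Rmult_le_compat_l; lra. }
  assert (Q5 : c * exp (- 5 * s / 4) * (1 + 25 * al ^ 2 * s ^ 2) = c * exp (- 5 * s / 4) + 25 * al ^ 2 * (c * (exp (- 5 * s / 4) * s ^ 2))) by ring.
  assert (Q6 : c * exp (- 5 * s / 4) * (1 + 25 * al ^ 2 * s ^ 2) <= c * (101 * al ^ 2 * exp (- s / 4))).
  { rewrite Q5. nra. }
  replace (exp w * (al ^ 2 * (101 * exp (- PI * al))) * (r4 ^ Z.abs_nat k * r4 ^ Z.abs_nat l))
    with (c * (101 * al ^ 2 * (r4 ^ Z.abs_nat k * r4 ^ Z.abs_nat l))) by (unfold c; ring).
  assert (0 <= exp (- s / 4)) by (left; apply exp_pos).
  assert (Q7 : c * (101 * al ^ 2 * exp (- s / 4)) <= c * (101 * al ^ 2 * (r4 ^ Z.abs_nat k * r4 ^ Z.abs_nat l))).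
  { apply Rmult_le_compat_l; [lra|]. apply Rmult_le_compat_l; [lra|]. exact H5. }
  lra.
Qed.

Lemma U_eq al y K L : y <> 0 ->
  U al y K L = - PI * al * ((2 * K + L) ^ 2 / 4 * / y + y * L ^ 2).
Proof. intros Hy. unfold U. field. auto. Qed.

Lemma U_le_s4 al y K L : 0 <= al -> 1/4 <= y <= 1 ->
  U al y K L <= - PI * al * ((2 * K + L) ^ 2 + L ^ 2) / 4.
Proof.
  intros Hal Hy. rewrite U_eq by lra.
  assert (HPI := PI_bounds).
  assert (Hz : 1 <= / y).
  { rewrite <- Rinv_1. apply Rinv_le_contravar; lra. }
  assert (H1 : (2 * K + L) ^ 2 / 4 <= (2 * K + L) ^ 2 / 4 * / y).
  { assert (0 <= (2 * K + L) ^ 2 / 4) by (assert (0 <= (2*K+L)^2) by apply pow2_ge_0; lra). nra. }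
  assert (H2 : L ^ 2 / 4 <= y * L ^ 2) by (assert (0 <= L^2) by apply pow2_ge_0; nra).
  assert (0 <= PI * al) by nra.
  assert (PI * al * (((2 * K + L) ^ 2 + L ^ 2) / 4) <= PI * al * ((2 * K + L) ^ 2 / 4 * / y + y * L ^ 2)).
  { apply Rmult_le_compat_l; lra. }
  lra.
Qed.

Lemma sqrt3_bounds : 1732/1000 <= sqrt 3 <= 17321/10000.
Proof.
  assert (H := sqrt_sqrt 3 ltac:(lra)). assert (H0 := sqrt_pos 3). split; nra.
Qed.

Lemma classify (k l : Z) :
  (k = 0 /\ l = 0)%Z \/ (l = 0 /\ (k = 1 \/ k = -1))%Z \/
  ((k = 0 /\ l = 1) \/ (k = 1 /\ l = -1) \/ (k = 0 /\ l = -1) \/ (k = -1 /\ l = 1))%Z \/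
  ((4 <= l * l) \/ (l * l = 1 /\ 9 <= (2 * k + l) * (2 * k + l)) \/ (l = 0 /\ 16 <= (2 * k + l) * (2 * k + l)))%Z.
Proof.
  destruct (Z.le_gt_cases 2 (Z.abs l)).
  - right; right; right. left. destruct (Z.le_gt_cases 0 l); nia.
  - assert (l = 0 \/ l = 1 \/ l = -1)%Z by lia.
    destruct H0 as [->|[->| ->]].
    + destruct (Z.le_gt_cases 2 (Z.abs k)).
      * right; right; right; right; right. split; [reflexivity|]. destruct (Z.le_gt_cases 0 k); nia.
      * assert (k = 0 \/ k = 1 \/ k = -1)%Z by lia. destruct H1 as [->|[->| ->]]; [left; lia| right; left; lia | right; left; lia].
    + destruct (Z.eq_dec k 0) as [->|]; [right; right; left; lia|].
      destruct (Z.eq_dec k (-1)) as [->|]; [right; right; left; lia|].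
      right; right; right; right; left. split; [lia|].
      destruct (Z.le_gt_cases 1 k); nia.
    + destruct (Z.eq_dec k 0) as [->|]; [right; right; left; lia|].
      destruct (Z.eq_dec k 1) as [->|]; [right; right; left; lia|].
      right; right; right; right; left. split; [lia|].
      destruct (Z.le_gt_cases 2 k); nia.
Qed.

Lemma U_rest al y (k l : Z) : 0 <= al -> sqrt 3 / 2 <= y <= 98/100 ->
  ((4 <= l * l) \/ (l * l = 1 /\ 9 <= (2 * k + l) * (2 * k + l)) \/ (l = 0 /\ 16 <= (2 * k + l) * (2 * k + l)))%Z ->
  U al y (IZR k) (IZR l) <= - PI * al / y - PI * al - PI * al * ((2 * IZR k + IZR l) ^ 2 + IZR l ^ 2) / 12.
Proof.
  intros Hal Hy Hc.
  assert (S3 := sqrt3_bounds).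
  assert (Hy0 : 866/1000 <= y) by lra.
  rewrite U_eq by lra.
  set (M := (2 * IZR k + IZR l) ^ 2). set (L2 := IZR l ^ 2).
  assert (HM0 : 0 <= M) by (unfold M; apply pow2_ge_0).
  assert (HL0 : 0 <= L2) by (unfold L2; apply pow2_ge_0).
  assert (Hz : 1 <= / y <= 1155/1000).
  { split.
    - rewrite <- Rinv_1. apply Rinv_le_contravar; lra.
    - replace (1155/1000) with (/ (1000/1155)) by field. apply Rinv_le_contravar; lra. }
  assert (Hz1 : 102/100 <= / y).
  { replace (102/100) with (/ (100/102)) by field. apply Rinv_le_contravar; lra. }
  assert (Key : / y + 1 + (M + L2) / 12 <= M / 4 * / y + y * L2).
  { assert (EM : forall a : Z, IZR a ^ 2 = IZR (a * a)) by (intros; rewrite mult_IZR; ring).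
    unfold M, L2. replace (2 * IZR k + IZR l) with (IZR (2 * k + l)) by (rewrite plus_IZR, mult_IZR; reflexivity).
    rewrite !EM. set (z := / y) in *.
    destruct Hc as [H|[[H1 H2]|[H1 H2]]].
    - apply IZR_le in H. assert (HA : 0 <= IZR ((2*k+l)*(2*k+l))) by (rewrite <- EM; apply pow2_ge_0).
      assert (0 <= IZR ((2*k+l)*(2*k+l)) * (z - 1/3)) by (apply Rmult_le_pos; lra).
      assert (866/1000 * IZR (l * l) <= y * IZR (l * l)) by (apply Rmult_le_compat_r; lra).
      lra.
    - apply IZR_le in H2. rewrite H1.
      assert (IZR ((2*k+l)*(2*k+l)) * (102/100 - 1/3) <= IZR ((2*k+l)*(2*k+l)) * (z - 1/3)) by (apply Rmult_le_compat_l; lra).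
      lra.
    - apply IZR_le in H2. subst l. change (IZR (0*0)) with 0.
      assert (IZR ((2*k+0)*(2*k+0)) * (102/100 - 1/3) <= IZR ((2*k+0)*(2*k+0)) * (z - 1/3)) by (apply Rmult_le_compat_l; lra).
      lra. }
  assert (HPI := PI_bounds).
  assert (0 <= PI * al) by nra.
  assert (E : - PI * al / y - PI * al - PI * al * (M + L2) / 12 = - (PI * al) * (/ y + 1 + (M + L2) / 12)) by (field; lra).
  fold M L2. rewrite E.
  assert (PI * al * (/ y + 1 + (M + L2) / 12) <= PI * al * (M / 4 * / y + y * L2)) by (apply Rmult_le_compat_l; lra).
  lra.
Qed.

Lemma T2_neg al y K L : T2 al y (-K) (-L) = T2 al y K L.
Proof.
  unfold T2.
  assert (E : Th y (-K) (-L) = - Th y K L) by (unfold Th; ring).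
  rewrite E, cos_neg, sin_neg.
  assert (EU : U al y (-K) (-L) = U al y K L) by (unfold U; ring).
  assert (E1 : qp y (-K) (-L) = qp y K L) by (unfold qp, P0, Rdiv; ring).
  assert (E2 : qpp y (-K) (-L) = qpp y K L) by (unfold qpp, P0, Rdiv; ring).
  assert (E3 : thp y (-K) (-L) = - thp y K L) by (unfold thp, Rdiv; ring).
  assert (E4 : thpp y (-K) (-L) = - thpp y K L) by (unfold thpp, Rdiv; ring).
  rewrite EU, E1, E2, E3, E4. ring.
Qed.

Lemma T2_origin al y : y <> 0 -> T2 al y 0 0 = 0.
Proof.
  intros Hy. unfold T2.
  assert (E1 : qp y 0 0 = 0) by (unfold qp, P0; field; auto).
  assert (E2 : qpp y 0 0 = 0) by (unfold qpp, P0; field; auto).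
  assert (E3 : thp y 0 0 = 0) by (unfold thp; field; auto).
  assert (E4 : thpp y 0 0 = 0) by (unfold thpp; field; auto).
  rewrite E1, E2, E3, E4. ring.
Qed.

Lemma y_facts y : sqrt 3 / 2 <= y <= 98/100 ->
  0 < y /\ 102/100 <= / y <= 1155/1000 /\ (/ y) ^ 2 <= 4/3.
Proof.
  intros Hy. assert (S3 := sqrt3_bounds).
  assert (Hy0 : 866/1000 <= y) by lra.
  split; [lra|]. split; [split|].
  - replace (102/100) with (/ (100/102)) by field. apply Rinv_le_contravar; lra.
  - replace (1155/1000) with (/ (1000/1155)) by field. apply Rinv_le_contravar; lra.
  - assert (Hs : sqrt 3 * sqrt 3 = 3) by (apply sqrt_sqrt; lra).
    assert (3/4 <= y ^ 2) by nra.
    rewrite <- Rinv_pow by lra. replace (4/3) with (/ (3/4)) by field.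
    apply Rinv_le_contravar; lra.
Qed.

Lemma T2_A al y : 5 <= al -> sqrt 3 / 2 <= y <= 98/100 ->
  T2 al y 1 0 <= - 3 * al ^ 2 * exp (- PI * al / y).
Proof.
  intros Hal Hy. destruct (y_facts y Hy) as [Hy0 [Hz Hz2]].
  assert (HPI := PI_bounds).
  set (z := / y) in *.
  assert (EU : U al y 1 0 = - PI * al / y) by (unfold U; field; lra).
  assert (E1 : qp y 1 0 = - z ^ 2) by (unfold qp, P0, z; field; lra).
  assert (E2 : qpp y 1 0 = 2 * z ^ 3) by (unfold qpp, P0, z; field; lra).
  assert (E3 : thp y 1 0 = PI * z ^ 3 / 2) by (unfold thp, z; field; lra).
  assert (E4 : thpp y 1 0 = - 3 * PI * z ^ 4 / 2) by (unfold thpp, z; field; lra).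
  assert (ETh : Th y 1 0 = PI - PI * z ^ 2 / 4) by (unfold Th, a1, a2, z; field; lra).
  unfold T2. rewrite EU, E1, E2, E3, E4, ETh, Rtrigo_facts.cos_pi_minus, sin_PI_x.
  set (x := PI * z ^ 2 / 4).
  assert (Hx : 0 < x <= PI / 3).
  { unfold x. assert (0 < z ^ 2) by nra. assert (0 < PI * z ^ 2) by nra.
    assert (PI * z ^ 2 <= PI * (4/3)) by (apply Rmult_le_compat_l; lra). split; lra. }
  assert (HC : 1/2 <= cos x).
  { destruct (Req_dec x (PI/3)) as [->|Hne].
    - rewrite cos_PI3. lra.
    - rewrite <- cos_PI3. left. apply cos_decreasing_1; lra. }
  assert (HS : 0 <= sin x) by (apply sin_ge_0; lra).
  set (E := exp (- PI * al / y)).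
  assert (HE : 0 < E) by apply exp_pos.
  assert (Hz2' : 10404/10000 <= z ^ 2) by nra.
  assert (Hz4 : 1082/1000 <= z ^ 4) by (replace (z ^ 4) with (z ^ 2 * z ^ 2) by ring; nra).
  assert (Hz3 : z ^ 3 <= 1541/1000) by (replace (z ^ 3) with (z ^ 2 * z) by ring; nra).
  assert (Hz6 : z ^ 6 <= 2374/1000).
  { replace (z ^ 6) with (z ^ 2 * z ^ 2 * z ^ 2) by ring.
    assert (z ^ 2 * z ^ 2 <= 16/9) by nra. nra. }
  assert (HPa : 15 <= PI * al) by nra.
  set (X := PI ^ 2 * al ^ 2 * (- z ^ 2) ^ 2 - PI * al * (2 * z ^ 3) - (PI * z ^ 3 / 2) ^ 2).
  assert (HX : 6 * al ^ 2 <= X).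
  { unfold X.
    assert (h1 : 9 * (1082/1000) <= PI ^ 2 * z ^ 4) by nra.
    assert (h2 : PI * al * (2 * z ^ 3) <= 2 * 4 * (1541/1000) * al) by nra.
    assert (h3 : (PI * z ^ 3 / 2) ^ 2 <= 16 * (2374/1000) / 4) by nra.
    assert (h4 : PI ^ 2 * al ^ 2 * (- z ^ 2) ^ 2 = (PI ^ 2 * z ^ 4) * al ^ 2) by ring.
    assert (0 <= al ^ 2) by nra.
    assert (9 * (1082/1000) * al ^ 2 <= (PI ^ 2 * z ^ 4) * al ^ 2) by (apply Rmult_le_compat_r; lra).
    nra. }
  set (Y := 2 * PI * al * - z ^ 2 * (PI * z ^ 3 / 2) - - 3 * PI * z ^ 4 / 2).
  assert (HY : Y <= 0).
  { assert (0 <= PI * z ^ 4) by nra.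
    assert (EY : Y = (PI * z ^ 4) * (3/2 - PI * al * z)) by (unfold Y; field).
    rewrite EY.
    assert (PI * al * z >= 15) by nra. nra. }
  assert (X * - cos x + Y * sin x <= - 3 * al ^ 2).
  { assert (Y * sin x <= 0) by nra. nra. }
  fold X Y.
  replace (exp (- PI * al / y)) with E by reflexivity.
  nra.
Qed.

Lemma T2_B al y : 5 <= al -> sqrt 3 / 2 <= y <= 98/100 -> T2 al y 0 1 <= 0.
Proof.
  intros Hal Hy. destruct (y_facts y Hy) as [Hy0 [Hz Hz2]].
  assert (HPI := PI_bounds).
  set (z := / y) in *.
  assert (E1 : qp y 0 1 = 1 - z ^ 2 / 4) by (unfold qp, P0, z; field; lra).
  assert (E2 : qpp y 0 1 = z ^ 3 / 2) by (unfold qpp, P0, z; field; lra).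
  assert (E3 : thp y 0 1 = PI * z ^ 3 / 4) by (unfold thp, z; field; lra).
  assert (E4 : thpp y 0 1 = - (3 * PI * z ^ 4 / 4)) by (unfold thpp, z; field; lra).
  set (x := PI * z ^ 2 / 8).
  assert (ETh : Th y 0 1 = - (PI / 2 + x)) by (unfold Th, a1, a2, x, z; field; lra).
  assert (Ec : cos (Th y 0 1) = - sin x).
  { rewrite ETh, cos_neg, cos_plus, cos_PI2, sin_PI2. ring. }
  assert (Es : sin (Th y 0 1) = - cos x).
  { rewrite ETh, sin_neg, sin_plus, cos_PI2, sin_PI2. ring. }
  unfold T2. rewrite E1, E2, E3, E4, Ec, Es.
  assert (Hx : 0 < x <= PI / 6).
  { unfold x. assert (0 < z ^ 2) by nra. assert (0 < PI * z ^ 2) by nra.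
    assert (PI * z ^ 2 <= PI * (4/3)) by (apply Rmult_le_compat_l; lra). split; lra. }
  assert (HS : 0 <= sin x) by (apply sin_ge_0; lra).
  assert (HC : 0 <= cos x) by (apply cos_ge_0; lra).
  assert (HE : 0 < exp (U al y 0 1)) by apply exp_pos.
  assert (Hz3 : z ^ 3 <= 1541/1000) by (replace (z ^ 3) with (z ^ 2 * z) by ring; nra).
  assert (Hz3' : 0 <= z ^ 3) by (replace (z ^ 3) with (z ^ 2 * z) by ring; nra).
  assert (Hz4 : 0 <= z ^ 4) by (replace (z ^ 4) with (z ^ 2 * z ^ 2) by ring; nra).
  assert (HQ : 2/3 <= 1 - z ^ 2 / 4) by lra.
  assert (HPa : 15 <= PI * al) by nra.
  set (X1 := PI ^ 2 * al ^ 2 * (1 - z ^ 2 / 4) ^ 2 - PI * al * (z ^ 3 / 2) - (PI * z ^ 3 / 4) ^ 2).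
  assert (HX1 : 0 <= X1).
  { unfold X1.
    assert (h1 : (4/9) * (PI * al) ^ 2 <= PI ^ 2 * al ^ 2 * (1 - z ^ 2 / 4) ^ 2).
    { replace (PI ^ 2 * al ^ 2 * (1 - z ^ 2 / 4) ^ 2) with ((PI * al) ^ 2 * (1 - z ^ 2 / 4) ^ 2) by ring.
      assert (4/9 <= (1 - z ^ 2 / 4) ^ 2) by nra.
      assert (0 <= (PI * al) ^ 2) by apply pow2_ge_0. nra. }
    assert (h2 : 15 * (PI * al) <= (PI * al) ^ 2) by nra.
    assert (h3 : PI * al * (z ^ 3 / 2) <= PI * al * (1541/2000)) by (apply Rmult_le_compat_l; lra).
    assert (h4 : (PI * z ^ 3 / 4) ^ 2 <= (4 * (1541/1000) / 4) ^ 2).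
    { apply pow_incr. split. assert (0 <= PI * z ^ 3) by nra. lra.
      assert (PI * z ^ 3 <= 4 * (1541/1000)) by nra. lra. }
    lra. }
  set (X2 := 2 * PI * al * (1 - z ^ 2 / 4) * (PI * z ^ 3 / 4) - - (3 * PI * z ^ 4 / 4)).
  assert (HX2 : 0 <= X2).
  { unfold X2. assert (0 <= PI * al * (1 - z ^ 2 / 4)) by nra.
    assert (0 <= PI * z ^ 3) by nra. assert (0 <= PI * z ^ 4) by nra. nra. }
  fold X1 X2.
  assert (HN : X1 * - sin x + X2 * - cos x <= 0) by nra.
  apply Rle_trans with (exp (U al y 0 1) * 0); [apply Rmult_le_compat_l; lra | lra].
Qed.

Lemma T2_B2 al y : y <> 0 -> T2 al y 1 (-1) = T2 al y 0 1.
Proof.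
  intros Hy. unfold T2.
  assert (ETh : Th y 1 (-1) = Th y 0 1 + 2 * PI) by (unfold Th, a1, a2; field; auto).
  assert (Ec : cos (Th y 1 (-1)) = cos (Th y 0 1)).
  { rewrite ETh, cos_plus, cos_2PI, sin_2PI. ring. }
  assert (Es : sin (Th y 1 (-1)) = sin (Th y 0 1)).
  { rewrite ETh, sin_plus, cos_2PI, sin_2PI. ring. }
  assert (EU : U al y 1 (-1) = U al y 0 1) by (unfold U; field; auto).
  assert (E1 : qp y 1 (-1) = qp y 0 1) by (unfold qp, P0; field; auto).
  assert (E2 : qpp y 1 (-1) = qpp y 0 1) by (unfold qpp, P0; field; auto).
  assert (E3 : thp y 1 (-1) = thp y 0 1) by (unfold thp; field; auto).
  assert (E4 : thpp y 1 (-1) = thpp y 0 1) by (unfold thpp; field; auto).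
  rewrite Ec, Es, EU, E1, E2, E3, E4. reflexivity.
Qed.

Definition indA (k l : Z) : R := if (Z.eqb l 0 && Z.eqb (Z.abs k) 1)%bool then 1 else 0.

Definition domf (al y : R) (k l : Z) : R :=
  exp (- PI * al / y) * (al ^ 2 * (101 * exp (- PI * al))) * (r4 ^ Z.abs_nat k * r4 ^ Z.abs_nat l)
  - 3 * al ^ 2 * exp (- PI * al / y) * indA k l.

Lemma IZR_m1 : IZR (-1) = Ropp (IZR 1).
Proof. change (IZR (-1)) with (IZR (Z.opp 1)). rewrite opp_IZR. reflexivity. Qed.

Lemma T2_dom al y k l : 5 <= al -> sqrt 3 / 2 <= y <= 98/100 ->
  T2 al y (IZR k) (IZR l) <= domf al y k l.
Proof.
  intros Hal Hy.
  assert (S3 := sqrt3_bounds).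
  assert (Hy' : 17/20 <= y <= 99/100) by lra.
  assert (Hy0 : y <> 0) by lra.
  assert (Hr := r4_bounds).
  set (Bd := exp (- PI * al / y) * (al ^ 2 * (101 * exp (- PI * al))) * (r4 ^ Z.abs_nat k * r4 ^ Z.abs_nat l)).
  assert (HBd : 0 <= Bd).
  { unfold Bd. apply Rmult_le_pos; [apply Rmult_le_pos|].
    - left; apply exp_pos.
    - apply Rmult_le_pos; [nra|]. apply Rmult_le_pos; [lra| left; apply exp_pos].
    - apply Rmult_le_pos; apply pow_le; lra. }
  assert (HE : 0 < exp (- PI * al / y)) by apply exp_pos.
  unfold domf. fold Bd.
  destruct (classify k l) as [[-> ->]|[[-> [-> | ->]]|[[[-> ->]|[[-> ->]|[[-> ->]|[-> ->]]]]|Hrest]]].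
  - rewrite T2_origin by auto. unfold indA. simpl. lra.
  - assert (H := T2_A al y Hal Hy). unfold indA. simpl. nra.
  - assert (H := T2_A al y Hal Hy).
    assert (E : T2 al y (IZR (-1)) (IZR 0) = T2 al y 1 0).
    { rewrite <- (T2_neg al y 1 0). rewrite IZR_m1, Ropp_0. reflexivity. }
    rewrite E. unfold indA. simpl. nra.
  - assert (H := T2_B al y Hal Hy). unfold indA. simpl. lra.
  - assert (H := T2_B al y Hal Hy). rewrite IZR_m1, T2_B2 by auto. unfold indA. simpl. lra.
  - assert (H := T2_B al y Hal Hy).
    assert (E : T2 al y (IZR 0) (IZR (-1)) = T2 al y 0 1).
    { rewrite <- (T2_neg al y 0 1). rewrite IZR_m1, Ropp_0. reflexivity. }
    rewrite E. unfold indA. simpl. lra.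
  - assert (H := T2_B al y Hal Hy).
    assert (E : T2 al y (IZR (-1)) (IZR 1) = T2 al y 0 1).
    { rewrite <- (T2_B2 al y Hy0). rewrite <- (T2_neg al y 1 (-1)). rewrite IZR_m1, Ropp_involutive. reflexivity. }
    rewrite E. unfold indA. simpl. lra.
  - assert (Hind : indA k l = 0).
    { unfold indA. destruct (Z.eqb_spec l 0); destruct (Z.eqb_spec (Z.abs k) 1); simpl; auto.
      exfalso. subst l. destruct Hrest as [H|[[H1 H2]|[H1 H2]]]; try lia.
      all: destruct (Z.le_gt_cases 0 k); nia. }
    rewrite Hind.
    destruct (T_bounds al y k l Hal Hy') as [_ [_ HT]].
    set (s := (2 * IZR k + IZR l) ^ 2 + IZR l ^ 2) in *.
    assert (Hs := s_ge_abs k l). fold s in Hs.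
    assert (HU := U_rest al y k l ltac:(lra) Hy Hrest). fold s in HU.
    assert (HD := decay_rest al (U al y (IZR k) (IZR l)) s (- PI * al / y) k l Hal Hs HU).
    assert (T2 al y (IZR k) (IZR l) <= Rabs (T2 al y (IZR k) (IZR l))) by apply Rle_abs.
    unfold Bd. lra.
Qed.

Lemma Series_single (c : R) (j : nat) (a : nat -> R) :
  (forall n, a n = if Nat.eqb n j then c else 0) -> Series a = c.
Proof.
  revert a. induction j; intros a Ha.
  - rewrite (Series_ext a (fun n => c * 0 ^ n)).
    + rewrite (Series_scal_l c (fun n => 0 ^ n)). rewrite (is_series_unique (fun n => 0 ^ n) (/ (1 - 0))).
      * field.
      * apply is_series_geom. rewrite Rabs_R0. lra.
    + intros n. rewrite Ha. destruct n; simpl; ring.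
  - rewrite Series_incr_1_aux.
    + apply IHj. intros n. rewrite Ha. reflexivity.
    + rewrite Ha. reflexivity.
Qed.

Definition indK (k : Z) : R := if Z.eqb (Z.abs k) 1 then 1 else 0.

Lemma sumZ_indK : sumZ indK = 2.
Proof.
  unfold sumZ.
  rewrite (Series_single 1 1 (fun n => indK (Z.of_nat n))).
  - rewrite (Series_single 1 0 (fun n => indK (- Z.of_nat (S n)))).
    + ring.
    + intros i. unfold indK. destruct (Z.eqb_spec (Z.abs (- Z.of_nat (S i))) 1).
      * destruct i; [reflexivity|lia].
      * destruct i; [lia|reflexivity].
  - intros i. unfold indK. destruct (Z.eqb_spec (Z.abs (Z.of_nat i)) 1).
    * destruct i as [|[|i]]; [lia|reflexivity|lia].
    * destruct i as [|[|i]]; [reflexivity|lia|reflexivity].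
Qed.

Lemma sumZ_delta0 (c : R) : sumZ (fun l => if Z.eqb l 0 then c else 0) = c.
Proof.
  unfold sumZ.
  rewrite (Series_single c 0 (fun n => if Z.eqb (Z.of_nat n) 0 then c else 0)).
  - rewrite (Series_single 0 0 (fun n => if Z.eqb (- Z.of_nat (S n)) 0 then c else 0)).
    + ring.
    + intros i. destruct (Z.eqb_spec (- Z.of_nat (S i)) 0); [lia|]. destruct i; reflexivity.
  - intros i. destruct i; simpl; auto.
Qed.

Lemma indA_split k l : indA k l = if Z.eqb l 0 then indK k else 0.
Proof. unfold indA, indK. destruct (Z.eqb l 0); simpl; reflexivity. Qed.

Lemma sumZ_indA k : sumZ (fun l => indA k l) = indK k.
Proof.
  rewrite (sumZ_ext _ (fun l => if Z.eqb l 0 then indK k else 0)) by (intros; apply indA_split).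
  apply sumZ_delta0.
Qed.

Lemma exZ_indK : exZ indK.
Proof.
  apply (exZ_bound _ (gZ 2 (1/2))); [| apply gZ_ex; lra].
  intros k. unfold indK, gZ. destruct (Z.eqb_spec (Z.abs k) 1).
  - rewrite Rabs_R1. replace (Z.abs_nat k) with 1%nat by lia. simpl. lra.
  - rewrite Rabs_R0. apply Rmult_le_pos; [lra|]. apply pow_le; lra.
Qed.

Lemma exZ_indA k : exZ (fun l => indA k l).
Proof.
  apply (exZ_bound _ (gZ 2 (1/2))); [| apply gZ_ex; lra].
  intros l. unfold gZ. rewrite indA_split. destruct (Z.eqb_spec l 0).
  - subst l. simpl. unfold indK. destruct (Z.abs k =? 1)%Z; [rewrite Rabs_R1| rewrite Rabs_R0]; lra.
  - rewrite Rabs_R0. apply Rmult_le_pos; [lra|]. apply pow_le; lra.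
Qed.

Definition Cal (al : R) := 1 + 100 * al ^ 2.
Definition G4 := (1 + r4) / (1 - r4).
Definition DD := Dint (17/20) (99/100).

Lemma r4_lt1 : 0 <= r4 < 1.
Proof. generalize r4_bounds. lra. Qed.

Lemma Tj_bound al x k l : 5 <= al -> DD x ->
  Rabs (T0 al x (IZR k) (IZR l)) <= gZ (Cal al * r4 ^ Z.abs_nat k) r4 l /\
  Rabs (T1 al x (IZR k) (IZR l)) <= gZ (Cal al * r4 ^ Z.abs_nat k) r4 l /\
  Rabs (T2 al x (IZR k) (IZR l)) <= gZ (Cal al * r4 ^ Z.abs_nat k) r4 l.
Proof.
  intros Hal Hx. unfold DD, Dint in Hx.
  destruct (T_bounds al x k l Hal ltac:(lra)) as [B0 [B1 B2]].
  assert (HU := U_le_s4 al x (IZR k) (IZR l) ltac:(lra) ltac:(lra)).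
  assert (Hs := s_ge_abs k l).
  assert (HD := decay al (U al x (IZR k) (IZR l)) _ k l Hal Hs HU).
  replace (gZ (Cal al * r4 ^ Z.abs_nat k) r4 l) with ((1 + 100 * al ^ 2) * (r4 ^ Z.abs_nat k * r4 ^ Z.abs_nat l))
    by (unfold gZ, Cal; ring).
  split; [|split]; lra.
Qed.

Definition h0 al k y := sumZ (fun l => T0 al y (IZR k) (IZR l)).
Definition h1 al k y := sumZ (fun l => T1 al y (IZR k) (IZR l)).
Definition h2 al k y := sumZ (fun l => T2 al y (IZR k) (IZR l)).

Lemma DD_nz x : DD x -> x <> 0.
Proof. unfold DD, Dint. lra. Qed.

Lemma inner_d0 al k x : 5 <= al -> DD x -> is_derive (h0 al k) x (h1 al k x).
Proof.
  intros Hal Hx. unfold h0, h1.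
  apply (sumZ_is_derive (fun l y => T0 al y (IZR k) (IZR l)) (fun l y => T1 al y (IZR k) (IZR l))
           (17/20) (99/100) (gZ (Cal al * r4 ^ Z.abs_nat k) r4) (gZ (Cal al * r4 ^ Z.abs_nat k) r4)).
  - intros l t Dt. apply T0_deriv. apply DD_nz. exact Dt.
  - intros l t Dt. apply T1_cont. apply DD_nz. exact Dt.
  - intros l t Dt. apply (Tj_bound al t k l Hal Dt).
  - apply gZ_ex. apply r4_lt1.
  - intros l t Dt. apply (Tj_bound al t k l Hal Dt).
  - apply gZ_ex. apply r4_lt1.
  - exact Hx.
Qed.

Lemma inner_d1 al k x : 5 <= al -> DD x -> is_derive (h1 al k) x (h2 al k x).
Proof.
  intros Hal Hx. unfold h1, h2.
  apply (sumZ_is_derive (fun l y => T1 al y (IZR k) (IZR l)) (fun l y => T2 al y (IZR k) (IZR l))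
           (17/20) (99/100) (gZ (Cal al * r4 ^ Z.abs_nat k) r4) (gZ (Cal al * r4 ^ Z.abs_nat k) r4)).
  - intros l t Dt. apply T1_deriv. apply DD_nz. exact Dt.
  - intros l t Dt. apply T2_cont. apply DD_nz. exact Dt.
  - intros l t Dt. apply (Tj_bound al t k l Hal Dt).
  - apply gZ_ex. apply r4_lt1.
  - intros l t Dt. apply (Tj_bound al t k l Hal Dt).
  - apply gZ_ex. apply r4_lt1.
  - exact Hx.
Qed.

Lemma inner_c2 al k x : 5 <= al -> DD x -> continuous (h2 al k) x.
Proof.
  intros Hal Hx. unfold h2.
  apply (sumZ_continuous (fun l y => T2 al y (IZR k) (IZR l)) (17/20) (99/100) (gZ (Cal al * r4 ^ Z.abs_nat k) r4)).
  - intros l t Dt. apply T2_cont. apply DD_nz. exact Dt.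
  - intros l t Dt. apply (Tj_bound al t k l Hal Dt).
  - apply gZ_ex. apply r4_lt1.
  - exact Hx.
Qed.

Lemma sumZ_gZ_bound (f : Z -> R) c : (forall l, Rabs (f l) <= gZ c r4 l) ->
  Rabs (sumZ f) <= c * G4.
Proof.
  intros H. eapply Rle_trans; [apply (sumZ_abs_le f (gZ c r4)); auto; apply gZ_ex; apply r4_lt1|].
  rewrite gZ_sum by apply r4_lt1. unfold G4. lra.
Qed.

Lemma h_bounds al k x : 5 <= al -> DD x ->
  Rabs (h0 al k x) <= gZ (Cal al * G4) r4 k /\ Rabs (h1 al k x) <= gZ (Cal al * G4) r4 k /\
  Rabs (h2 al k x) <= gZ (Cal al * G4) r4 k.
Proof.
  intros Hal Hx.
  replace (gZ (Cal al * G4) r4 k) with ((Cal al * r4 ^ Z.abs_nat k) * G4) by (unfold gZ; ring).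
  split; [|split]; apply sumZ_gZ_bound; intros l; apply (Tj_bound al x k l Hal Hx).
Qed.

Lemma outer_d0 al x : 5 <= al -> DD x ->
  is_derive (fun y => sumZ (fun k => h0 al k y)) x (sumZ (fun k => h1 al k x)).
Proof.
  intros Hal Hx.
  apply (sumZ_is_derive (fun k y => h0 al k y) (fun k y => h1 al k y) (17/20) (99/100)
           (gZ (Cal al * G4) r4) (gZ (Cal al * G4) r4)).
  - intros k t Dt. apply inner_d0; auto.
  - intros k t Dt. apply (ex_derive_continuous (h1 al k)). eexists. apply inner_d1; auto.
  - intros k t Dt. apply (h_bounds al k t Hal Dt).
  - apply gZ_ex. apply r4_lt1.
  - intros k t Dt. apply (h_bounds al k t Hal Dt).
  - apply gZ_ex. apply r4_lt1.
  - exact Hx.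
Qed.

Lemma outer_d1 al x : 5 <= al -> DD x ->
  is_derive (fun y => sumZ (fun k => h1 al k y)) x (sumZ (fun k => h2 al k x)).
Proof.
  intros Hal Hx.
  apply (sumZ_is_derive (fun k y => h1 al k y) (fun k y => h2 al k y) (17/20) (99/100)
           (gZ (Cal al * G4) r4) (gZ (Cal al * G4) r4)).
  - intros k t Dt. apply inner_d1; auto.
  - intros k t Dt. apply inner_c2; auto.
  - intros k t Dt. apply (h_bounds al k t Hal Dt).
  - apply gZ_ex. apply r4_lt1.
  - intros k t Dt. apply (h_bounds al k t Hal Dt).
  - apply gZ_ex. apply r4_lt1.
  - exact Hx.
Qed.

Lemma g_second al y : 5 <= al -> DD y -> Derive_n (g al) 2 y = sumZ (fun k => h2 al k y).
Proof.
  intros Hal Hy.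
  change (Derive_n (g al) 2 y) with (Derive (fun t => Derive (g al) t) y).
  transitivity (Derive (fun t => sumZ (fun k => h1 al k t)) y).
  2: { apply is_derive_unique. apply outer_d1; auto. }
  apply Derive_ext_loc.
  - generalize (Dint_loc _ _ y Hy). apply filter_imp. intros t Dt.
    apply is_derive_unique. change (g al) with (fun y => sumZ (fun k => h0 al k y)).
    apply outer_d0; auto.
Qed.

Lemma exZ_ext f g : (forall k, f k = g k) -> exZ f -> exZ g.
Proof.
  intros H [H1 H2]. split.
  - apply (ex_series_ext (fun n => f (Z.of_nat n))); auto.
  - apply (ex_series_ext (fun n => f (- Z.of_nat (S n))%Z)); auto.
Qed.

Lemma exp_INR_1 n : exp (INR n) = exp 1 ^ n.
Proof.
  induction n.
  - simpl. apply exp_0.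
  - rewrite S_INR, exp_plus, IHn. simpl. ring.
Qed.

Lemma exp_m15 : exp (- 15) <= / 32768.
Proof.
  assert (H2 : 2 <= exp 1) by (generalize (exp_ineq1_le 1); lra).
  assert (E : exp 15 = exp 1 ^ 15).
  { rewrite <- exp_INR_1. f_equal. simpl. ring. }
  assert (H : 32768 <= exp 15).
  { rewrite E. replace 32768 with (2 ^ 15) by (simpl; ring). apply pow_incr. lra. }
  assert (E2 : exp (-15) = / exp 15).
  { rewrite <- exp_Ropp. f_equal. }
  rewrite E2. apply Rinv_le_contravar; lra.
Qed.

Lemma G4_le : 0 <= G4 <= 9.
Proof.
  assert (H := r4_bounds). unfold G4. split.
  - apply Rmult_le_pos; [lra|]. left. apply Rinv_0_lt_compat. lra.
  - apply (Rmult_le_reg_r (1 - r4)); [lra|]. unfold Rdiv. rewrite Rmult_assoc, Rinv_l by lra. lra.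
Qed.

Theorem final (al y : R) : 5 <= al -> sqrt 3 / 2 <= y <= 98/100 ->
  sumZ (fun k => h2 al k y) < 0.
Proof.
  intros Hal Hy.
  assert (S3 := sqrt3_bounds).
  assert (HDy : DD y) by (unfold DD, Dint; lra).
  set (E := exp (- PI * al / y)).
  assert (HE : 0 < E) by apply exp_pos.
  set (c0 := E * (al ^ 2 * (101 * exp (- PI * al)))).
  set (B0 := - (3 * al ^ 2 * E)).
  assert (Edom : forall k l, domf al y k l = gZ (c0 * r4 ^ Z.abs_nat k) r4 l + B0 * indA k l).
  { intros k l. unfold domf, gZ, c0, B0, E. ring. }
  assert (ExDom : forall k, exZ (fun l => domf al y k l)).
  { intros k. apply (exZ_ext (fun l => gZ (c0 * r4 ^ Z.abs_nat k) r4 l + B0 * indA k l)).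
    - intros l. symmetry. apply Edom.
    - apply exZ_plus; [apply gZ_ex; apply r4_lt1 | apply exZ_scal; apply exZ_indA]. }
  assert (SDom : forall k, sumZ (fun l => domf al y k l) = gZ (c0 * G4) r4 k + B0 * indK k).
  { intros k. rewrite (sumZ_ext _ (fun l => gZ (c0 * r4 ^ Z.abs_nat k) r4 l + B0 * indA k l)) by apply Edom.
    rewrite sumZ_plus; [| apply gZ_ex; apply r4_lt1 | apply exZ_scal; apply exZ_indA].
    rewrite sumZ_scal, sumZ_indA, gZ_sum by apply r4_lt1. unfold gZ, G4. ring. }
  assert (Step1 : sumZ (fun k => h2 al k y) <= sumZ (fun k => sumZ (fun l => domf al y k l))).
  { apply sumZ_le.
    - intros k. unfold h2. apply sumZ_le.
      + intros l. apply T2_dom; auto.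
      + apply (exZ_bound _ (gZ (Cal al * r4 ^ Z.abs_nat k) r4)); [| apply gZ_ex; apply r4_lt1].
        intros l. apply (Tj_bound al y k l Hal HDy).
      + apply ExDom.
    - apply (exZ_bound _ (gZ (Cal al * G4) r4)); [| apply gZ_ex; apply r4_lt1].
      intros k. apply (h_bounds al k y Hal HDy).
    - apply (exZ_ext (fun k => gZ (c0 * G4) r4 k + B0 * indK k)).
      + intros k. symmetry. apply SDom.
      + apply exZ_plus; [apply gZ_ex; apply r4_lt1 | apply exZ_scal; apply exZ_indK]. }
  rewrite (sumZ_ext (fun k => sumZ (fun l => domf al y k l)) (fun k => gZ (c0 * G4) r4 k + B0 * indK k)) in Step1 by apply SDom.
  rewrite sumZ_plus in Step1; [| apply gZ_ex; apply r4_lt1 | apply exZ_scal; apply exZ_indK].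
  rewrite sumZ_scal, sumZ_indK, gZ_sum in Step1 by apply r4_lt1.
  fold G4 in Step1.
  assert (HG := G4_le).
  assert (HPI := PI_bounds).
  assert (He : exp (- PI * al) <= / 32768).
  { eapply Rle_trans; [| apply exp_m15]. apply exp_mono. nra. }
  assert (He0 : 0 < exp (- PI * al)) by apply exp_pos.
  assert (Ha2 : 25 <= al ^ 2) by nra.
  assert (Hc0 : c0 * G4 * G4 <= E * al ^ 2 * (101 * / 32768) * 81).
  { unfold c0.
    assert (0 <= E * al ^ 2) by nra.
    assert (G4 * G4 <= 81) by nra.
    assert (0 <= G4 * G4) by nra.
    assert (Eq0 : E * (al ^ 2 * (101 * exp (- PI * al))) = (E * al ^ 2) * (101 * exp (- PI * al))) by ring.
    rewrite Eq0.
    assert ((E * al ^ 2) * (101 * exp (- PI * al)) <= (E * al ^ 2) * (101 * / 32768)).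
    { apply Rmult_le_compat_l; lra. }
    assert (0 <= (E * al ^ 2) * (101 * exp (- PI * al))) by (apply Rmult_le_pos; lra).
    replace (E * al ^ 2 * (101 * exp (- PI * al)) * G4 * G4) with ((E * al ^ 2 * (101 * exp (- PI * al))) * (G4 * G4)) by ring.
    replace (E * al ^ 2 * (101 * / 32768) * 81) with ((E * al ^ 2 * (101 * / 32768)) * 81) by ring.
    apply Rmult_le_compat; lra. }
  unfold B0 in Step1.
  assert (0 < E * al ^ 2) by nra.
  nra.
Qed.

Theorem mainTheorem19 (alpha y : R) :
  5 <= alpha ->
  sqrt 3 / 2 <= y <= sqrt 3 / 2 + 1 / (4 * sqrt alpha) ->
  Derive_n (g alpha) 2 y < 0.
Proof.
  intros Hal Hy.
  assert (S3 := sqrt3_bounds).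
  assert (Hs5 : 2236/1000 <= sqrt alpha).
  { assert (H := sqrt_sqrt alpha ltac:(lra)). assert (H0 := sqrt_pos alpha). nra. }
  assert (Hq : 1 / (4 * sqrt alpha) <= 1 / (4 * (2236/1000))).
  { unfold Rdiv. rewrite !Rmult_1_l. apply Rinv_le_contravar; lra. }
  assert (Hy' : sqrt 3 / 2 <= y <= 98/100) by lra.
  rewrite g_second by (auto; unfold DD, Dint; lra).
  apply final; auto.
Qed.
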